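(* Let $n\ge 2$ and let $G\subset\mathbb{R}^n$ be a bounded domain with smooth boundary $\Gamma$. Let $p\in\mathbb{R}$ satisfy $n>p\geq \frac{n}{2}>1$ if $n>2$ (respectively $n>p>1$ if $n=2$). Let $V\in L^p(G)$ be scalar-valued. Let $k_1=\|T\|_{[L^p(G),W^1_p(G)]}$ be the operator norm of the Teodorescu transform $T$ from $L^p(G)$ to $W^1_p(G)$, let $C$ be the embedding constant of $W^1_p(G)\hookrightarrow L^{2p}(G)$, and set $k_2=k_1C^2$. Let $\underline{a}_0\in W^1_p(G)$ be vector-valued and define recursively $$\underline{a}_m:=T\big(V+|\underline{a}_{m-1}|^2\big),\quad m=1,2,\ldots$$ Assume $\|V\|_{L^p}\leq \frac{1}{4k_1k_2}$ and put $$W=\sqrt{\frac{1}{4k_2^2}-\frac{k_1}{k_2}\|V\|_{L^p}}.$$ If for some index $m_0$ $$\frac{1}{2k_2}-W\leq \|\underline{a}_{m_0}\|_{W^1_p}\leq \frac{1}{2k_2}+W,$$ then $\|\underline{a}_{m_0+1}\|_{W^1_p}\leq \|\underline{a}_{m_0}\|_{W^1_p}$, and the sequence $\{\underline{a}_m\}_{m\geq m_0}$ is bounded in $W^1_p(G)$ by $\|\underline{a}_{m_0}\|_{W^1_p}$.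
   Context: $\mathcal{C}\ell_{0,n}$ denotes the real Clifford algebra generated by an orthonormal basis $e_1,\dots,e_n$ of $\mathbb{R}^n$ with $e_ie_j+e_je_i=-2\delta_{ij}$; a vector-valued function is $\underline{a}(x)=\sum_{i=1}^n a_i(x)e_i$ with real $a_i$, and $|\underline{a}|^2=\sum_i a_i^2$. Function spaces of $\mathcal{C}\ell_{0,n}$-valued functions $f=\sum_A f_Ae_A$ are defined componentwise, with norm $\|f\|_B=\big(\sum_A\|f_A\|_B^2\big)^{1/2}$. The Teodorescu transform is $Tf(x)=\frac{1}{\omega_n}\int_G\frac{x-y}{|x-y|^n}f(y)\,dy$ (with $x-y$ viewed as a Clifford vector and $\omega_n$ the surface area of the unit sphere in $\mathbb{R}^n$); it is a right inverse of the Dirac operator $D=\sum_{j=1}^n e_j\partial_{x_j}$, and maps scalar-valued functions to vector-valued ones. *)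

(* Defs.v *)
From HB Require Import structures.
From mathcomp Require Import all_boot all_order all_algebra.
From mathcomp Require Import all_classical all_reals all_analysis.
From Stdlib Require Import ClassicalEpsilon.
Set Implicit Arguments. Unset Strict Implicit. Unset Printing Implicit Defensive.
Import Order.TTheory GRing.Theory Num.Theory.
Import numFieldNormedType.Exports.
Local Open Scope classical_set_scope.
Local Open Scope ring_scope.

Section Defs.
Context {R : realType} {n : nat}.

(* Points of R^n for measure theory: n.-tuple R (with the product sigma-algebra);
   the same point as a row vector, for topology and differentiation. *)
Definition toRV (x : n.-tuple R) : 'rV[R]_n := \row_i tnth x i.

Definition edist (x y : n.-tuple R) : R :=
  Num.sqrt (\sum_(i < n) (tnth x i - tnth y i) ^+ 2).

Definition is_lebesgue (mu : {measure set (n.-tuple R) -> \bar R}) : Prop :=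
  forall a b : n.-tuple R, (forall i, tnth a i <= tnth b i) ->
    mu [set x | forall i, tnth a i <= tnth x i <= tnth b i] =
      (\prod_(i < n) (tnth b i - tnth a i))%:E.

Definition partial (j : 'I_n) (f : 'rV[R]_n -> R) : 'rV[R]_n -> R :=
  fun x => derive f x (delta_mx 0 j).
Definition ipartial (js : seq 'I_n) (f : 'rV[R]_n -> R) : 'rV[R]_n -> R :=
  foldr partial f js.
Definition smooth (f : 'rV[R]_n -> R) : Prop :=
  forall (js : seq 'I_n) (x : 'rV[R]_n), differentiable (ipartial js f) x.

Definition smooth_boundary (D : set 'rV[R]_n) : Prop :=
  forall x0, closure D x0 -> ~ D x0 ->
    exists (r : R) (j : 'I_n) (s : R) (h : 'rV[R]_n -> R),
      [/\ 0 < r, (s = 1 \/ s = -1), smooth h,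
          (forall x, h x = h (x - (x 0 j) *: delta_mx 0 j)) &
          D `&` ball x0 r = [set x | ball x0 r x /\ s * x 0 j < s * h x]].
Definition bounded_smooth_domain (G : set (n.-tuple R)) : Prop :=
  let D := toRV @` G in
  [/\ open D, connected D, D !=set0, bounded_set D & smooth_boundary D].

Variable mu : {measure set (n.-tuple R) -> \bar R}.
Variable G : set (n.-tuple R).

Definition Lpnorm (q : R) (u : n.-tuple R -> R) : R :=
  fine (Lnorm mu q%:E (EFin \o (u \_ G))).
Definition inLp (q : R) (u : n.-tuple R -> R) : Prop :=
  measurable_fun G u /\ (Lnorm mu q%:E (EFin \o (u \_ G)) < +oo)%E.

Definition test_fun (phi : 'rV[R]_n -> R) : Prop :=
  smooth phi /\ compact (closure [set x | phi x != 0]) /\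
  closure [set x | phi x != 0] `<=` toRV @` G.

Definition weak_deriv (u : n.-tuple R -> R) (j : 'I_n) (g : n.-tuple R -> R) : Prop :=
  forall phi, test_fun phi ->
    Rintegral mu G (fun x => u x * partial j phi (toRV x)) =
    - Rintegral mu G (fun x => g x * phi (toRV x)).

Variable p : R.

Definition inW (u : n.-tuple R -> R) : Prop :=
  inLp p u /\ forall j, exists g, inLp p g /\ weak_deriv u j g.

(* a chosen weak derivative (unique a.e. when it exists) *)
Definition wderiv (u : n.-tuple R -> R) (j : 'I_n) : n.-tuple R -> R :=
  epsilon (inhabits (fun _ => 0)) (fun g => inLp p g /\ weak_deriv u j g).

Definition Wnorm (u : n.-tuple R -> R) : R :=
  powR (powR (Lpnorm p u) p + \sum_(j < n) powR (Lpnorm p (wderiv u j)) p) p^-1.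

(* vector-valued functions a = sum_i a_i e_i : componentwise spaces and norms *)
Definition vinW (a : 'I_n -> n.-tuple R -> R) : Prop := forall i, inW (a i).
Definition vWnorm (a : 'I_n -> n.-tuple R -> R) : R :=
  Num.sqrt (\sum_(i < n) Wnorm (a i) ^+ 2).

(* surface area of the unit sphere S^{n-1}: n * |B^n| *)
Definition omega : R :=
  n%:R * fine (mu [set x | \sum_(i < n) tnth x i ^+ 2 < 1]).

(* Teodorescu transform of a scalar function: vector-valued, component i *)
Definition teodorescu (f : n.-tuple R -> R) : 'I_n -> n.-tuple R -> R :=
  fun i x => omega^-1 *
    Rintegral mu G (fun y => (tnth x i - tnth y i) / edist x y ^+ n * f y).

End Defs.

(* Main.v *)
Require Import Defs.
From HB Require Import structures.
From mathcomp Require Import all_boot all_order all_algebra.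
From mathcomp Require Import all_classical all_reals all_analysis.
From mathcomp Require Import ring lra measurable_realfun.
Import Order.TTheory GRing.Theory Num.Theory.
Import numFieldNormedType.Exports.
Local Open Scope classical_set_scope.
Local Open Scope ring_scope.
Lemma toRV_inj (R : realType) n : injective (@toRV R n).
Proof.
move=> x y h; apply: eq_from_tnth => i.
by have := congr1 (fun M : 'rV[R]_n => M 0 i) h; rewrite !mxE.
Qed.

Definition box (R : realType) n (k : n.-tuple rat * rat) : set (n.-tuple R) :=
  [set x | forall i, `|ratr (tnth k.1 i) - tnth x i| < ratr k.2].

Lemma box_meas (R : realType) n k : measurable (@box R n k).
Proof.
have -> : @box R n k = \bigcap_(i in [set: 'I_n])
   (setT `&` (fun x : n.-tuple R => tnth x i) @^-1` ball (ratr (tnth k.1 i) : R) (ratr k.2)).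
  apply/seteqP; split => x /=.
    by move=> h i _; split => //; rewrite /ball /=; exact: h.
  by move=> h i; have [_] := h i I; rewrite /ball.
apply: fin_bigcap_measurable.
  exact: finite_finset.
move=> i _; apply: measurable_tnth => //.
by rewrite ball_itv; exact: measurable_itv.
Qed.

Lemma G_meas (R : realType) n (G : set (n.-tuple R)) :
  open (@toRV R n @` G) -> measurable G.
Proof.
move=> oD.
pose F (k : n.-tuple rat * rat) : set (n.-tuple R) :=
  if `[< @box R n k `<=` G >] then @box R n k else set0.
have -> : G = \bigcup_k F k.
  apply/seteqP; split; last first.
    move=> x [k _]; rewrite /F; case: asboolP => [h|//]; exact: h.
  move=> x Gx.
  have : nbhs (toRV x) (toRV @` G) by apply: oD; exists x.
  move=> /nbhs_ballP[e e0 be].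
  have [r /andP[r0 r1]] : exists r : rat, (0 < ratr r :> R) && (ratr r < e / 2).
    have [q] := @rat_in_itvoo R 0 (e / 2) ltac:(by rewrite divr_gt0).
    by rewrite in_itv /= => h; exists q.
  have : forall i : 'I_n, exists q : rat, `|ratr q - tnth x i| < (ratr r : R).
    move=> i; have [q] := @rat_in_itvoo R (tnth x i - ratr r) (tnth x i + ratr r)
      ltac:(by rewrite ltrBlDr -addrA ltrDl addr_gt0).
    rewrite in_itv /= => /andP[h1 h2]; exists q.
    rewrite ltr_norml; apply/andP; split; lra.
  move=> /choice[f hf].
  have sub : @box R n ([tuple f i | i < n], r) `<=` G.
    move=> y /= hy.
    have : ball (toRV x) e (toRV y).
      split => // i j; rewrite !mxE /ball /=.
      have := hy j; have := hf j; rewrite tnth_mktuple => h1 h2.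
      rewrite (le_lt_trans (_ : _ <= `|ratr (f j) - tnth x j| + `|ratr (f j) - tnth y j|)) //.
        rewrite (distrC _ (tnth x j)); exact: ler_distD.
      by rewrite (splitr e) ltrD // (lt_trans _ r1).
    move=> /be [z Gz /toRV_inj <-] //.
  exists ([tuple f i | i < n], r) => //.
    rewrite /F; case: asboolP => // _.
  by move=> i /=; rewrite tnth_mktuple.
apply: countable_bigcupT_measurable.
  exact: countableP.
move=> k; rewrite /F; case: asboolP => _ //.
exact: box_meas.
Qed.
Section An.
Context d (T : measurableType d) (R : realType).
Variable mu : {measure set T -> \bar R}.

Lemma Lnorm_sq (h : T -> R) (p : R) : 0 < p ->
  (Lnorm mu ((2 * p)%:E) (EFin \o h) < +oo)%E ->
  Lnorm mu (p%:E) (EFin \o (fun x => h x ^+ 2)) =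
  ((fine (Lnorm mu ((2 * p)%:E) (EFin \o h))) ^+ 2)%:E.
Proof.
move=> p0; rewrite unlock /= => Ifin.
have E1 x : (`|h x ^+ 2| `^ p)%:E = (`|h x| `^ (2 * p))%:E.
  by rewrite normrX -powR_mulrn // -powRrM.
under eq_integral do rewrite E1.
set I := (\int[mu]_x (`|h x| `^ (2 * p))%:E)%E.
have I0 : (0 <= I)%E by apply: integral_ge0 => x _; rewrite lee_fin powR_ge0.
have : (I < +oo)%E.
  apply: (lty_poweRy _ Ifin); rewrite invr_neq0 // mulf_neq0 // gt_eqF //.
move=> Ilt.
have If : I \is a fin_num by rewrite ge0_fin_numE.
rewrite -(fineK If) !poweR_EFin /=; congr EFin.
rewrite -powR_mulrn ?powR_ge0 // -powRrM; congr powR.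
by field; rewrite gt_eqF.
Qed.

Lemma mink_sum (I : Type) (s : seq I) (F : I -> T -> R) (p : R) : 1 <= p ->
  (forall i, measurable_fun setT (F i)) ->
  (Lnorm mu (p%:E) (EFin \o (fun x => (\sum_(i <- s) F i x)%R)) <=
    \sum_(i <- s) Lnorm mu (p%:E) (EFin \o F i))%E.
Proof.
move=> p1 mF; elim: s => [|i s IH].
  have -> : EFin \o (fun x => \sum_(i <- [::]) F i x) = cst 0%E.
    by apply/funext => x; rewrite /= big_nil.
  by rewrite Lnorm0 ?big_nil // eqe gt_eqF // (lt_le_trans _ p1).
have -> : (fun x => \sum_(j <- i :: s) F j x) = (F i \+ (fun x => \sum_(j <- s) F j x))%R.
  by apply/funext => x; rewrite /= big_cons.
rewrite big_cons; apply: le_trans (minkowski_EFin _ _ _ p1) _ => //.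
  exact: measurable_sum.
exact: leeD2l.
Qed.
End An.

Lemma key (R : realType) (n : nat) (mu : {measure set (n.-tuple R) -> \bar R})
  (G : set (n.-tuple R)) (p : R) (V : n.-tuple R -> R) (b : 'I_n -> n.-tuple R -> R) :
  measurable G -> 1 <= p -> inLp mu G p V -> (forall i, inLp mu G (2 * p) (b i)) ->
  inLp mu G p (fun x => V x + \sum_(i < n) b i x ^+ 2) /\
  Lpnorm mu G p (fun x => V x + \sum_(i < n) b i x ^+ 2) <=
    Lpnorm mu G p V + \sum_(i < n) Lpnorm mu G (2 * p) (b i) ^+ 2.
Proof.
move=> mG p1 [mV fV] hb.
have p0 : 0 < p by apply: lt_le_trans p1.
have mb i : measurable_fun setT (b i \_ G) by apply/(measurable_restrictT _ mG); case: (hb i).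
have mVG : measurable_fun setT (V \_ G) by apply/(measurable_restrictT _ mG).
have E : ((fun x => V x + \sum_(i < n) b i x ^+ 2) \_ G) =
    (V \_ G \+ (fun x => \sum_(i < n) (b i \_ G) x ^+ 2))%R.
  apply/funext => x /=; rewrite /patch; case: ifP => // _.
  by rewrite add0r big1 // => i _; rewrite expr0n.
have sq i : Lnorm mu (p%:E) (EFin \o (fun x => (b i \_ G) x ^+ 2)) =
    ((Lpnorm mu G (2 * p) (b i)) ^+ 2)%:E.
  by rewrite Lnorm_sq //; case: (hb i).
have le1 : (Lnorm mu (p%:E) (EFin \o ((fun x => (V x + \sum_(i < n) b i x ^+ 2)%R) \_ G)) <=
    (Lpnorm mu G p V + \sum_(i < n) Lpnorm mu G (2 * p) (b i) ^+ 2)%:E)%E.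
  rewrite E; apply: le_trans (minkowski_EFin _ _ _ p1) _ => //.
    by apply: measurable_sum => i; apply: measurable_funX.
  rewrite EFinD; apply: leeD.
    by rewrite /Lpnorm fineK // ge0_fin_numE ?Lnorm_ge0.
  rewrite -sumEFin.
  apply: le_trans.
    by apply: mink_sum => // i; apply: measurable_funX.
  by apply: lee_sum => i _; rewrite sq.
have fin : (Lnorm mu (p%:E) (EFin \o ((fun x => (V x + \sum_(i < n) b i x ^+ 2)%R) \_ G)) < +oo)%E.
  by apply: le_lt_trans le1 _; rewrite ltry.
split.
  split => //.
  apply: measurable_funD => //; apply: measurable_sum => i; apply: measurable_funX.
  by case: (hb i).
rewrite /Lpnorm -lee_fin fineK //.
by rewrite ge0_fin_numE ?Lnorm_ge0.
Qed.
Theorem lemma1 (R : realType) (n : nat)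
  (mu : {measure set (n.-tuple R) -> \bar R}) (G : set (n.-tuple R)) (p : R)
  (V : n.-tuple R -> R) (a0 : 'I_n -> n.-tuple R -> R)
  (a : nat -> 'I_n -> n.-tuple R -> R) (k1 C : R) :
  (2 <= n)%N ->
  is_lebesgue mu ->
  bounded_smooth_domain G ->
  ((2 < n)%N -> p < (n%:R : R) /\ (n%:R : R) / 2 <= p /\ 1 < (n%:R : R) / 2) ->
  (n = 2%N -> p < (n%:R : R) /\ 1 < p) ->
  inLp mu G p V ->
  (* k1 is the operator norm of T : L^p(G) -> W^1_p(G) *)
  (forall f, inLp mu G p f -> vinW mu G p (teodorescu mu G f)) ->
  (forall f, inLp mu G p f ->
     vWnorm mu G p (teodorescu mu G f) <= k1 * Lpnorm mu G p f) ->
  (forall k, (forall f, inLp mu G p f ->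
     vWnorm mu G p (teodorescu mu G f) <= k * Lpnorm mu G p f) -> k1 <= k) ->
  (* C is the embedding constant of W^1_p(G) into L^{2p}(G) *)
  (forall u, inW mu G p u -> inLp mu G (2 * p) u) ->
  (forall u, inW mu G p u -> Lpnorm mu G (2 * p) u <= C * Wnorm mu G p u) ->
  (forall c, (forall u, inW mu G p u ->
     Lpnorm mu G (2 * p) u <= c * Wnorm mu G p u) -> C <= c) ->
  vinW mu G p a0 ->
  a 0%N = a0 ->
  (forall m, a m.+1 =
     teodorescu mu G (fun x => V x + \sum_(i < n) a m i x ^+ 2)) ->
  let k2 := k1 * C ^+ 2 in
  Lpnorm mu G p V <= (4 * k1 * k2)^-1 ->
  let W := Num.sqrt ((4 * k2 ^+ 2)^-1 - k1 / k2 * Lpnorm mu G p V) in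
  forall m0,
    (2 * k2)^-1 - W <= vWnorm mu G p (a m0) <= (2 * k2)^-1 + W ->
    vWnorm mu G p (a m0.+1) <= vWnorm mu G p (a m0) /\
    (forall m, (m0 <= m)%N ->
       vinW mu G p (a m) /\ vWnorm mu G p (a m) <= vWnorm mu G p (a m0)).
Proof.
move=> hn hleb [oD _ _ _ _] hp1 hp2 hV hT hTn hk1 hE hEn hC ha0 ha00 hrec k2 hVle W m0 /andP[hlo hhi].
have mG : measurable G by apply: G_meas.
have p1 : 1 <= p.
  have [n2|n2] : n = 2%N \/ (2 < n)%N by move: hn; rewrite leq_eqVlt => /orP[/eqP <-|]; [left|right].
    by have [_ /ltW] := hp2 n2.
  by have [_ [h1 /ltW h2]] := hp1 n2; apply: le_trans h1.
set Lv := Lpnorm mu G p V.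
have Lv0 : 0 <= Lv by apply: fine_ge0; exact: Lnorm_ge0.
pose F m := fun x => V x + \sum_(i < n) a m i x ^+ 2.
have keyF m : vinW mu G p (a m) -> inLp mu G p (F m) /\
    Lpnorm mu G p (F m) <= Lv + C ^+ 2 * vWnorm mu G p (a m) ^+ 2.
  move=> ham.
  have [h1 h2] := @key R n mu G p V (a m) mG p1 hV (fun i => hE _ (ham i)).
  split => //; apply: le_trans h2 _; rewrite lerD2l.
  rewrite /vWnorm sqr_sqrtr; last by apply: sumr_ge0 => i _; exact: sqr_ge0.
  rewrite mulr_sumr; apply: ler_sum => i _.
  have l0 : 0 <= Lpnorm mu G (2 * p) (a m i) by apply: fine_ge0; exact: Lnorm_ge0.
  have := hEn _ (ham i) => hl.
  rewrite -exprMn; apply: lerXn2r => //; rewrite nnegrE //.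
  exact: le_trans hl.
have allW m : vinW mu G p (a m).
  elim: m => [|m IH]; first by rewrite ha00.
  by rewrite hrec; apply: hT; have [] := keyF m IH.
set X := vWnorm mu G p (a m0).
have X0 : 0 <= X by apply: sqrtr_ge0.
have alg : forall y, 0 <= y -> y <= X -> 0 <= k1 -> k1 * Lv + k2 * y ^+ 2 <= X.
  move=> y y0 yX k10.
  have k20 : 0 <= k2 by rewrite /k2 mulr_ge0 // sqr_ge0.
  have ky : k2 * y ^+ 2 <= k2 * X ^+ 2 by rewrite ler_wpM2l // lerXn2r.
  have [k2e|k2p] := eqVneq k2 0.
    move: hVle; rewrite k2e mulr0 invr0 => hv.
    have : k1 * Lv <= 0 by rewrite mulr_ge0_le0.
    move: ky; rewrite k2e !mul0r; lra.
  have k2g : 0 < k2 by rewrite lt_def k2p k20.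
  have k1g : 0 < k1.
    rewrite lt_def k10 andbT; apply/eqP => k1e; move: k2p; by rewrite /k2 k1e mul0r eqxx.
  set u := (2 * k2)^-1.
  have hu : k2 * u = 2^-1 by rewrite /u invfM mulrCA mulfV ?mulr1 // gt_eqF.
  have hc : k1 * Lv <= (4 * k2)^-1.
    apply: le_trans (ler_wpM2l (ltW k1g) hVle) _.
    rewrite le_eqVlt; apply/orP; left; apply/eqP; field.
    by rewrite !gt_eqF.
  set D := (4 * k2 ^+ 2)^-1 - k1 / k2 * Lv.
  have hD : k2 * D = k2 * u ^+ 2 - k1 * Lv.
    rewrite /D /u mulrBr; congr (_ - _).
      by field; rewrite gt_eqF.
    by field; rewrite gt_eqF.
  have D0 : 0 <= D.
    rewrite -(pmulr_rge0 _ k2g) hD subr_ge0.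
    apply: le_trans hc _; rewrite /u.
    rewrite le_eqVlt; apply/orP; left; apply/eqP; field; rewrite gt_eqF //.
  have hW : W ^+ 2 = D by rewrite sqr_sqrtr.
  have W0 : 0 <= W by apply: sqrtr_ge0.
  have h1 : (X - u) ^+ 2 <= W ^+ 2.
    move: hlo hhi; rewrite -/u -/W -/X => hlo hhi.
    have e : (X - u) ^+ 2 - W ^+ 2 = (X - u - W) * (X - u + W) by ring.
    rewrite -subr_le0 e; apply: mulr_le0_ge0.
      by rewrite -addrA -opprD subr_le0.
    by rewrite (_ : X - u + W = X - (u - W)) ?subr_ge0 //; ring.
  rewrite hW in h1.
  have h2 : k2 * (X - u) ^+ 2 <= k2 * D by rewrite ler_wpM2l.
  rewrite hD in h2.
  have e2 : k2 * (X - u) ^+ 2 = k2 * X ^+ 2 - X + k2 * u ^+ 2.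
    transitivity (k2 * X ^+ 2 - 2 * (k2 * u) * X + k2 * u ^+ 2); first by ring.
    by rewrite hu mulfV ?mul1r // pnatr_eq0.
  rewrite e2 in h2.
  move: h2 ky; set A := k2 * X ^+ 2; set B := k2 * u ^+ 2; set Cc := k1 * Lv; set E := k2 * y ^+ 2.
  lra.
have step m : vWnorm mu G p (a m) <= X -> vWnorm mu G p (a m.+1) <= X.
  move=> hm.
  have [hF hFn] := keyF m (allW m).
  have := hTn _ hF; rewrite -hrec => h.
  have LF0 : 0 <= Lpnorm mu G p (F m) by apply: fine_ge0; exact: Lnorm_ge0.
  have [k10|k1n] := leP 0 k1; last first.
    by apply: le_trans h _; apply: le_trans X0; rewrite nmulr_rle0.
  apply: le_trans h _; apply: le_trans (alg _ (sqrtr_ge0 _) hm k10).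
  by rewrite /k2 -mulrA -mulrDr ler_wpM2l.
split; first exact: (step m0 (lexx X)).
move=> m hm0; split; first exact: (allW m).
elim: m hm0 => [|m IH].
  rewrite leqn0 => /eqP e; rewrite -e; exact: lexx.
rewrite leq_eqVlt => /orP[/eqP e|hm].
  rewrite -e; exact: lexx.
exact: (step m (IH hm)).
Qed.
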